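(* Let $G$ be a finite group, $n = \exp(G)$, and $\sigma \in \mathrm{Gal}(\mathbb{Q}_n:\mathbb{Q})$. Suppose $\sigma$ fixes all but $4$ irreducible characters of $G$ and has exactly two orbits of size $2$ on $\mathrm{Irr}(G)$, so that the characters not fixed by $\sigma$ are $X = \{\chi_1, \sigma\chi_1, \chi_2, \sigma\chi_2\}$. If $x \in G$ represents a conjugacy class not fixed by $\sigma$, then $$|C_G(x)| = |\chi_1(x) - \sigma\chi_1(x)|^2 + |\chi_2(x) - \sigma\chi_2(x)|^2.$$
   Context: $\exp(G)$ is the exponent of $G$; $\mathbb{Q}_n=\mathbb{Q}(\zeta)$ with $\zeta$ a primitive $n$-th root of unity. For $\sigma\in\mathrm{Gal}(\mathbb{Q}_n:\mathbb{Q})$ with $\sigma(\zeta)=\zeta^{r}$ ($r$ coprime to $n$), $\sigma$ acts on $\mathrm{Irr}(G)$ (complex irreducible characters) by $(\sigma\chi)(g)=\sigma(\chi(g))$ and on conjugacy classes by $\sigma\cdot x^G=(x^{r})^G$; then $(\sigma\chi)(x)=\chi(\sigma\cdot x)$. *)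

(* Defs.v *)
From mathcomp Require Export all_boot all_order all_algebra all_fingroup all_solvable all_field all_character.
Set Implicit Arguments. Unset Strict Implicit. Unset Printing Implicit Defensive.

(* Main.v *)
Require Import Defs.
From mathcomp Require Import ring.
Import GRing.Theory Num.Theory.
Local Open Scope ring_scope.

Lemma aut_char_pow (gT : finGroupType) (G : {group gT}) (r : nat)
  (u : {rmorphism algC -> algC}) (x : gT) (chi : 'CF(G)) :
  (forall z : algC, z ^+ exponent G = 1 -> u z = z ^+ r) ->
  x \in G -> chi \is a character -> u (chi x) = chi (x ^+ r)%g.
Proof.
move=> hu Gx Nchi.
have sHG: <[x]>%g \subset G by rewrite cycle_subG.
have Hx : x \in <[x]>%g := cycle_id x.
have Hxr: (x ^+ r)%g \in <[x]>%g by rewrite mem_cycle.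
rewrite -(cfResE chi sHG Hx) -(cfResE chi sHG Hxr).
have [s ->] := char_sum_irr (cfRes_char <[x]>%g Nchi).
rewrite !sum_cfunE rmorph_sum; apply: eq_bigr => j _.
have Lj : 'chi[<[x]>%G]_j \is a linear_char by rewrite irr_cyclic_lin ?cycle_cyclic.
rewrite lin_charX // hu // -lin_charX // expg_exponent // lin_char1 //.
Qed.

Theorem mainTheorem10 (gT : finGroupType) (G : {group gT})
    (r : nat) (u : {rmorphism algC -> algC}) (i1 i2 : Iirr G) (x : gT) :
  coprime r (exponent G) ->
  (forall z : algC, z ^+ exponent G = 1 -> u z = z ^+ r) ->
  cfAut u (cfAut u 'chi_i1) = 'chi_i1 ->
  cfAut u (cfAut u 'chi_i2) = 'chi_i2 ->
  uniq [:: 'chi_i1; cfAut u 'chi_i1; 'chi_i2; cfAut u 'chi_i2] ->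
  (forall i : Iirr G, cfAut u 'chi_i != 'chi_i <->
     'chi_i \in [:: 'chi_i1; cfAut u 'chi_i1; 'chi_i2; cfAut u 'chi_i2]) ->
  x \in G ->
  ((x ^+ r) ^: G != x ^: G)%g ->
  (#|('C_G[x])%g|%:R : algC) =
    `|'chi_i1 x - cfAut u 'chi_i1 x| ^+ 2 + `|'chi_i2 x - cfAut u 'chi_i2 x| ^+ 2.
Proof.
move=> _ hu A1 A2 U X Gx ncl.
have Gxr : (x ^+ r)%g \in G by rewrite groupX.
have autE i : cfAut u 'chi[G]_i x = 'chi_i (x ^+ r)%g.
  by rewrite cfunE (@aut_char_pow _ _ r u x _ hu Gx (irr_char i)).
have O1 := second_orthogonality_relation x Gx.
have O2 := second_orthogonality_relation x Gxr.
rewrite class_refl mulr1n in O1.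
have nx : (x \in (x ^+ r) ^: G)%g = false.
  apply/negbTE; apply: contra ncl => /class_eqP ->; exact: eqxx.
rewrite nx mulr0n in O2.
pose f (i : Iirr G) := 'chi_i x * ('chi_i x - cfAut u 'chi_i x)^*.
have Hsum : (#|('C_G[x])%g|%:R : algC) = \sum_i f i.
  rewrite -O1 -[LHS]subr0; rewrite -{2}O2 -sumrB; apply: eq_bigr => i _.
  by rewrite /f autE rmorphB mulrBr.
set j1 := aut_Iirr u i1; set j2 := aut_Iirr u i2.
pose s := [:: i1; j1; i2; j2].
have Es : [:: 'chi_i1; cfAut u 'chi_i1; 'chi_i2; cfAut u 'chi_i2] = map (fun i => 'chi[G]_i) s.
  by rewrite /= !aut_IirrE.
have Us : uniq s by rewrite -(map_inj_uniq irr_inj) -Es.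
have memS i : (i \in s) = ('chi_i \in [:: 'chi_i1; cfAut u 'chi_i1; 'chi_i2; cfAut u 'chi_i2]).
  by rewrite Es mem_map //; exact: irr_inj.
rewrite Hsum (bigID (mem s)) /= [X in _ + X]big1 ?addr0; last first.
  move=> i; rewrite memS => /negP nin; rewrite /f.
  have : cfAut u 'chi_i = 'chi_i.
    have : ~~ (cfAut u 'chi_i != 'chi_i) by apply/negP => /X.
    by rewrite negbK => /eqP.
  by move=> ->; rewrite subrr rmorph0 mulr0.
rewrite -big_uniq //= !big_cons big_nil addr0 /f.
rewrite /j1 /j2 !aut_IirrE A1 A2.
rewrite !normCK; set a := 'chi_i1 x; set b := cfAut u 'chi_i1 x.
set c := 'chi_i2 x; set d := cfAut u 'chi_i2 x.
rewrite !rmorphB /=. ring.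
Qed.
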